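(* Let $\beta,\delta\in(0,1)$, $K>0$, and let $\eta_1,\eta_2\ge0$ be constants. Consider $$\frac{df}{dt}=\tfrac12 fm\beta L-\delta f-\eta_1 f,\qquad \frac{dm}{dt}=\tfrac12 fm\beta L-\delta m-\eta_2 m,\qquad L=1-\frac{f+m}{K}.$$ If $\beta K<2\delta+\eta_1+\eta_2$, then the trivial equilibrium $(0,0)$ is globally asymptotically stable.
   Context: $f,m$ are female and male densities, and $\eta_1,\eta_2$ are the female and male harvesting rates (the ''female harvesting male harvesting'' model). *)

(* Defs.v *)
From Stdlib Require Import Reals.
From Coquelicot Require Import Coquelicot.
Open Scope R_scope.

Definition Lmate (K f m : R) : R := 1 - (f + m) / K.

Definition rhs_f (beta delta eta1 K f m : R) : R :=
  / 2 * f * m * beta * Lmate K f m - delta * f - eta1 * f.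
Definition rhs_m (beta delta eta2 K f m : R) : R :=
  / 2 * f * m * beta * Lmate K f m - delta * m - eta2 * m.

Definition is_solution (beta delta eta1 eta2 K : R) (f m : R -> R) : Prop :=
  (forall eps, 0 < eps -> exists d, 0 < d /\
     forall t, 0 <= t < d -> Rabs (f t - f 0) < eps /\ Rabs (m t - m 0) < eps) /\
  (forall t, 0 < t ->
     is_derive f t (rhs_f beta delta eta1 K (f t) (m t)) /\
     is_derive m t (rhs_m beta delta eta2 K (f t) (m t))).

Definition nrm2 (x y : R) : R := sqrt (x ^ 2 + y ^ 2).

(* Global asymptotic stability of (0,0) on the (biologically relevant)
   nonnegative quadrant: Lyapunov stability + global attractivity. *)
Definition GAS_origin (beta delta eta1 eta2 K : R) : Prop :=
  (forall eps, 0 < eps -> exists d, 0 < d /\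
     forall f m : R -> R, is_solution beta delta eta1 eta2 K f m ->
       0 <= f 0 -> 0 <= m 0 -> nrm2 (f 0) (m 0) < d ->
       forall t, 0 <= t -> nrm2 (f t) (m t) < eps) /\
  (forall f m : R -> R, is_solution beta delta eta1 eta2 K f m ->
       0 <= f 0 -> 0 <= m 0 ->
       is_lim f p_infty 0 /\ is_lim m p_infty 0).

(* Main.v *)
Require Import Defs.
From Stdlib Require Import Reals.
From Coquelicot Require Import Coquelicot.
From Stdlib Require Import Lra Psatz.
Open Scope R_scope.

Definition rc (g : R -> R) (t : R) := filterlim g (at_right t) (locally (g t)).

Lemma rc_of_cont g t : continuous g t -> rc g t.
Proof. intros H. unfold rc. eapply filterlim_filter_le_1; [apply filter_le_within|exact H]. Qed.

Lemma rc_mult g h t : rc g t -> rc h t -> rc (fun x => g x * h x) t.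
Proof.
  intros Hg Hh. unfold rc.
  eapply filterlim_comp_2; [exact Hg|exact Hh|].
  apply (filterlim_mult (K:=R_AbsRing) (g t) (h t)).
Qed.

Lemma rc_plus g h t : rc g t -> rc h t -> rc (fun x => g x + h x) t.
Proof.
  intros Hg Hh. unfold rc.
  eapply filterlim_comp_2; [exact Hg|exact Hh|].
  apply (filterlim_plus (V:=R_NormedModule) (g t) (h t)).
Qed.

Lemma rc_const c t : rc (fun _ => c) t.
Proof. apply rc_of_cont. apply (continuous_const (U:=R_UniformSpace)). Qed.

Lemma rc_exp c t : rc (fun x => exp (c * x)) t.
Proof. apply rc_of_cont. apply (ex_derive_continuous (K:=R_AbsRing) (V:=R_NormedModule)). auto_derive. auto. Qed.

Lemma rc_eps g t : rc g t -> forall eps, 0 < eps -> exists d, 0 < d /\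
  forall y, t < y < t + d -> Rabs (g y - g t) < eps.
Proof.
  intros H eps He. destruct (proj1 (filterlim_locally g (g t)) H (mkposreal eps He)) as [d Hd].
  exists d. split. apply cond_pos. intros y Hy. apply (Hd y).
  - change (Rabs (y - t) < d). rewrite Rabs_right; lra.
  - lra.
Qed.

Lemma rc_of_eps g t : (forall eps, 0 < eps -> exists d, 0 < d /\
  forall y, t <= y < t + d -> Rabs (g y - g t) < eps) -> rc g t.
Proof.
  intros H. unfold rc. apply filterlim_locally. intros eps.
  destruct (H eps (cond_pos eps)) as [d [Hd Hy]].
  exists (mkposreal d Hd). intros y Hb Hty. apply Hy.
  change (Rabs (y - t) < d) in Hb. apply Rabs_def2 in Hb. lra.
Qed.

Lemma mono_nonpos g dg a b : (forall t, a < t <= b -> is_derive g t (dg t) /\ dg t <= 0) ->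
  forall x y, a < x <= y -> y <= b -> g y <= g x.
Proof.
  intros H x y Hx Hy.
  destruct (MVT_gen g x y dg) as [c [Hc Heq]].
  - intros z Hz. rewrite Rmin_left in Hz by lra. rewrite Rmax_right in Hz by lra.
    apply H; lra.
  - intros z Hz. rewrite Rmin_left in Hz by lra. rewrite Rmax_right in Hz by lra.
    apply continuity_pt_filterlim. apply (ex_derive_continuous (K:=R_AbsRing) (V:=R_NormedModule)).
    exists (dg z). apply H; lra.
  - rewrite Rmin_left in Hc by lra. rewrite Rmax_right in Hc by lra.
    assert (dg c <= 0) by (apply H; lra). nra.
Qed.

Lemma mono0 g dg : rc g 0 -> (forall t, 0 < t -> is_derive g t (dg t) /\ dg t <= 0) ->
  forall t, 0 <= t -> g t <= g 0.
Proof.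
  intros Hrc H t Ht. destruct (Req_dec t 0) as [->|Hn]; [lra|].
  apply Rnot_gt_le. intro Hgt.
  destruct (rc_eps g 0 Hrc (g t - g 0)) as [d [Hd Hy]]; [lra|].
  set (y := Rmin t (d/2)).
  assert (0 < y) by (unfold y; apply Rmin_glb_lt; lra).
  assert (y <= t) by (unfold y; apply Rmin_l).
  assert (y < 0 + d) by (unfold y; generalize (Rmin_r t (d/2)); lra).
  specialize (Hy y ltac:(lra)). apply Rabs_def2 in Hy.
  assert (g t <= g y) by (apply (mono_nonpos g dg 0 t); [intros; apply H; lra|lra|lra]).
  lra.
Qed.

Lemma cont_eps g t : continuous g t -> forall eps, 0 < eps -> exists d, 0 < d /\
  forall y, Rabs (y - t) < d -> Rabs (g y - g t) < eps.
Proof.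
  intros H eps He. destruct (proj1 (filterlim_locally g (g t)) H (mkposreal eps He)) as [d Hd].
  exists d. split. apply cond_pos. intros y Hy. apply (Hd y). exact Hy.
Qed.

Lemma is_derive_eq (f : R -> R) (x d1 d2 : R) : is_derive f x d1 -> d1 = d2 -> is_derive f x d2.
Proof. intros H ->. exact H. Qed.

Lemma der_cont (g : R -> R) t d : is_derive g t d -> continuous g t.
Proof. intros H. apply (ex_derive_continuous (K:=R_AbsRing) (V:=R_NormedModule)). exists d; exact H. Qed.

Lemma pos_lemma (g a : R -> R) :
  0 <= g 0 ->
  (forall t, 0 <= t -> rc g t) ->
  (forall t, 0 < t -> is_derive g t (g t * a t)) ->
  (forall s, 0 <= s -> exists M d, 0 < d /\ forall t, s < t < s + d -> a t <= M) ->
  forall t, 0 <= t -> 0 <= g t.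
Proof.
  intros H0 Hrc Hder Hbnd t1 Ht1. apply Rnot_gt_le. intro Hneg.
  assert (Ht1p : 0 < t1) by (destruct (Req_dec t1 0) as [->|]; lra).
  set (E := fun x => 0 <= x <= t1 /\ 0 <= g x).
  destruct (completeness E) as [r [Hub Hlub]].
  { exists t1. intros x [Hx _]. lra. }
  { exists 0. split; lra. }
  assert (Hr0 : 0 <= r) by (apply Hub; split; lra).
  assert (Hrt : r <= t1) by (apply Hlub; intros x [Hx _]; lra).
  assert (Hn : forall t, r < t <= t1 -> g t < 0).
  { intros t Ht. apply Rnot_le_lt. intro. assert (t <= r) by (apply Hub; split; lra). lra. }
  assert (Hgr : 0 <= g r).
  { destruct (Req_dec r 0) as [->|Hr]; [exact H0|].
    apply Rnot_gt_le. intro Hg.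
    destruct (cont_eps g r (der_cont g r _ (Hder r ltac:(lra))) (- g r)) as [d [Hd Hy]]; [lra|].
    assert (r <= r - d/2); [|lra].
    apply Hlub. intros x [Hx Hgx].
    assert (x <= r) by (apply Hub; split; lra).
    apply Rnot_lt_le. intro Hlt.
    assert (Rabs (x - r) < d) by (rewrite Rabs_left1; lra).
    specialize (Hy x H1). apply Rabs_def2 in Hy. lra. }
  assert (Hrt' : r < t1) by (destruct (Req_dec r t1) as [->|]; lra).
  destruct (Hbnd r Hr0) as [M [d [Hd HM]]].
  set (t2 := Rmin t1 (r + d/2)).
  assert (r < t2) by (unfold t2; apply Rmin_glb_lt; lra).
  assert (t2 <= t1) by (unfold t2; apply Rmin_l).
  assert (t2 < r + d) by (unfold t2; generalize (Rmin_r t1 (r + d/2)); lra).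
  set (psi := fun x => (-1 * g x) * exp ((-M) * x)).
  assert (Hmono : forall y, r < y <= t2 -> psi t2 <= psi y).
  { intros y Hy.
    apply (mono_nonpos psi (fun x => exp ((-M) * x) * ((- g x) * (a x - M))) r t2); [|lra|lra].
    intros x Hx. split.
    - unfold psi.
      assert (Hd1 : is_derive (fun x0 => -1 * g x0) x (-1 * (g x * a x))).
      { apply (is_derive_scal g x (-1)). apply Hder. lra. }
      assert (Hd2 : is_derive (fun x0 => exp ((-M) * x0)) x (exp ((-M) * x) * (-M))).
      { auto_derive. auto. ring. }
      generalize (is_derive_mult (K:=R_AbsRing) _ _ x _ _ Hd1 Hd2 ltac:(intros; apply Rmult_comm)).
      intro HH. eapply is_derive_eq; [exact HH|]. unfold plus, mult; simpl. ring.
    - assert (g x < 0) by (apply Hn; lra).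
      assert (a x <= M) by (apply HM; lra).
      assert (0 < exp ((-M) * x)) by apply exp_pos.
      assert (0 <= - g x * (M - a x)) by (apply Rmult_le_pos; lra).
      assert (0 <= exp ((-M) * x) * (- g x * (M - a x))) by (apply Rmult_le_pos; lra).
      nra. }
  assert (Hp2 : 0 < psi t2).
  { unfold psi. assert (g t2 < 0) by (apply Hn; lra). assert (0 < exp ((-M) * t2)) by apply exp_pos. nra. }
  assert (Hpr : psi r <= 0).
  { unfold psi. assert (0 < exp ((-M) * r)) by apply exp_pos. nra. }
  assert (Hrcp : rc psi r).
  { unfold psi. apply rc_mult; [apply rc_mult; [apply rc_const|apply Hrc; lra]|apply rc_exp]. }
  destruct (rc_eps psi r Hrcp (psi t2) Hp2) as [e [He Hy]].
  set (y := Rmin t2 (r + e/2)).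
  assert (r < y) by (unfold y; apply Rmin_glb_lt; lra).
  assert (y <= t2) by (unfold y; apply Rmin_l).
  assert (y < r + e) by (unfold y; generalize (Rmin_r t2 (r + e/2)); lra).
  specialize (Hy y ltac:(lra)). apply Rabs_def2 in Hy.
  specialize (Hmono y ltac:(lra)). lra.
Qed.

Lemma abs_betw a : - Rabs a <= a <= Rabs a.
Proof. split; [generalize (Rle_abs (-a)); rewrite Rabs_Ropp; lra| apply Rle_abs]. Qed.

Lemma bnd_lemma (x y w : R -> R) K beta c s : 0 < K -> 0 < beta -> 0 <= c ->
  rc x s -> rc y s -> rc w s -> exists M d, 0 < d /\ forall t, s < t < s + d ->
  / 2 * w t * beta * Lmate K (x t) (y t) - c <= M.
Proof.
  intros HK Hb Hc Hx Hy Hw.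
  destruct (rc_eps x s Hx 1 Rlt_0_1) as [d1 [Hd1 H1]].
  destruct (rc_eps y s Hy 1 Rlt_0_1) as [d2 [Hd2 H2]].
  destruct (rc_eps w s Hw 1 Rlt_0_1) as [d3 [Hd3 H3]].
  set (B := Rabs (w s) + 1). set (C := Rabs (x s) + Rabs (y s) + 2).
  exists (/2 * beta * (B * (1 + C / K))), (Rmin d1 (Rmin d2 d3)).
  split. { apply Rmin_glb_lt; [lra|apply Rmin_glb_lt; lra]. }
  intros t Ht.
  assert (t < s + d1) by (generalize (Rmin_l d1 (Rmin d2 d3)); lra).
  assert (t < s + d2) by (generalize (Rmin_r d1 (Rmin d2 d3)) (Rmin_l d2 d3); lra).
  assert (t < s + d3) by (generalize (Rmin_r d1 (Rmin d2 d3)) (Rmin_r d2 d3); lra).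
  specialize (H1 t ltac:(lra)). specialize (H2 t ltac:(lra)). specialize (H3 t ltac:(lra)).
  apply Rabs_def2 in H1. apply Rabs_def2 in H2. apply Rabs_def2 in H3.
  generalize (abs_betw (x s)) (abs_betw (y s)) (abs_betw (w s)). intros A1 A2 A3.
  unfold Lmate.
  set (u := (x t + y t) / K). set (v := C / K).
  assert (Hu : u * K = x t + y t) by (unfold u; field; lra).
  assert (Hv : v * K = C) by (unfold v; field; lra).
  assert (HC : C = Rabs (x s) + Rabs (y s) + 2) by reflexivity.
  assert (Q1 : 0 < (v - u) * K) by (rewrite Rmult_minus_distr_r; lra).
  assert (Q2 : 0 < (u + v) * K) by (rewrite Rmult_plus_distr_r; lra).
  assert (Hvu : u < v) by (destruct (Rlt_or_le u v); auto; assert ((v - u) * K <= 0) by (apply Rmult_le_0_r; lra); lra).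
  assert (Hvu' : - v < u) by (destruct (Rlt_or_le (-v) u); auto; assert ((u + v) * K <= 0) by (apply Rmult_le_0_r; lra); lra).
  assert (HwB : - B < w t < B) by (unfold B; lra).
  assert (0 <= (B - w t) * (1 + v + (1 - u))) by (apply Rmult_le_pos; lra).
  assert (0 <= (B + w t) * (1 + v - (1 - u))) by (apply Rmult_le_pos; lra).
  assert (w t * (1 - u) <= B * (1 + v)) by nra.
  nra.
Qed.

Lemma core beta delta KK eta1 eta2 A k (f m : R -> R) :
  0 < beta -> 0 < delta -> 0 < KK -> 0 <= eta1 -> 0 <= eta2 ->
  0 <= A -> A * (2 * delta + eta1 + eta2 - beta * KK) = 2 * beta ->
  0 < k -> k <= delta -> k * A <= beta ->
  is_solution beta delta eta1 eta2 KK f m -> 0 <= f 0 -> 0 <= m 0 ->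
  forall t, 0 <= t -> 0 <= f t /\ 0 <= m t /\
    (f t + m t + A * (f t * m t)) * exp (k * t) <= f 0 + m 0 + A * (f 0 * m 0).
Proof.
  intros Hb Hd HK He1 He2 HA HAc Hk Hkd HkA [H0c Hder] Hf0 Hm0.
  assert (rcf : forall t, 0 <= t -> rc f t).
  { intros t Ht. destruct (Req_dec t 0) as [->|Hn].
    - apply rc_of_eps. intros eps He. destruct (H0c eps He) as [d [Hd' Hy]].
      exists d. split; auto. intros y Hy'. apply Hy. lra.
    - apply rc_of_cont. eapply der_cont. apply (proj1 (Hder t ltac:(lra))). }
  assert (rcm : forall t, 0 <= t -> rc m t).
  { intros t Ht. destruct (Req_dec t 0) as [->|Hn].
    - apply rc_of_eps. intros eps He. destruct (H0c eps He) as [d [Hd' Hy]].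
      exists d. split; auto. intros y Hy'. apply Hy. lra.
    - apply rc_of_cont. eapply der_cont. apply (proj2 (Hder t ltac:(lra))). }
  assert (posf : forall t, 0 <= t -> 0 <= f t).
  { apply (pos_lemma f (fun t => / 2 * m t * beta * Lmate KK (f t) (m t) - (delta + eta1))); auto.
    - intros t Ht. eapply is_derive_eq; [apply (proj1 (Hder t Ht))|]. cbv beta. unfold rhs_f. ring.
    - intros s Hs. apply bnd_lemma; auto; lra. }
  assert (posm : forall t, 0 <= t -> 0 <= m t).
  { apply (pos_lemma m (fun t => / 2 * f t * beta * Lmate KK (f t) (m t) - (delta + eta2))); auto.
    - intros t Ht. eapply is_derive_eq; [apply (proj2 (Hder t Ht))|]. cbv beta. unfold rhs_m. ring.
    - intros s Hs. apply bnd_lemma; auto; lra. }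
  set (G := fun t => (f t + m t + A * (f t * m t)) * exp (k * t)).
  set (dG := fun t =>
    let F' := rhs_f beta delta eta1 KK (f t) (m t) in
    let M' := rhs_m beta delta eta2 KK (f t) (m t) in
    (F' + M' + A * (F' * m t + f t * M')) * exp (k * t)
    + (f t + m t + A * (f t * m t)) * (exp (k * t) * k)).
  assert (HG : forall t, 0 < t -> is_derive G t (dG t) /\ dG t <= 0).
  { intros t Ht. destruct (Hder t Ht) as [HF HM].
    set (F' := rhs_f beta delta eta1 KK (f t) (m t)) in *.
    set (M' := rhs_m beta delta eta2 KK (f t) (m t)) in *.
    split.
    - assert (hFM := is_derive_mult (K:=R_AbsRing) _ _ t _ _ HF HM ltac:(intros; apply Rmult_comm)).
      assert (hS := is_derive_plus (K:=R_AbsRing) _ _ t _ _ HF HM).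
      assert (hA := is_derive_scal _ t A _ hFM).
      assert (hW := is_derive_plus (K:=R_AbsRing) _ _ t _ _ hS hA).
      assert (hE : is_derive (fun x => exp (k * x)) t (exp (k * t) * k)) by (auto_derive; auto; ring).
      assert (hG := is_derive_mult (K:=R_AbsRing) _ _ t _ _ hW hE ltac:(intros; apply Rmult_comm)).
      unfold G, dG. eapply is_derive_eq; [exact hG|]. unfold plus, mult; simpl. fold F' M'. ring.
    - assert (Hft := posf t ltac:(lra)). assert (Hmt := posm t ltac:(lra)).
      assert (He := exp_pos (k * t)).
      unfold dG. fold F' M'.
      set (LL := Lmate KK (f t) (m t)).
      set (SS := f t + m t). set (P := f t * m t).
      assert (HF' : F' = / 2 * f t * m t * beta * LL - delta * f t - eta1 * f t) by reflexivity.
      assert (HM' : M' = / 2 * f t * m t * beta * LL - delta * m t - eta2 * m t) by reflexivity.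
      assert (HLd : LL = 1 - SS / KK) by reflexivity.
      assert (HLK : LL * KK = KK - SS) by (rewrite HLd; field; lra).
      assert (HP : 0 <= P) by (apply Rmult_le_pos; auto).
      assert (HS : 0 <= SS) by (unfold SS; lra).
      assert (HL1 : LL <= 1).
      { assert (0 <= SS / KK) by (apply Rdiv_le_0_compat; lra). lra. }
      assert (HLS : LL * SS <= KK / 4).
      { assert (0 <= (KK / 2 - SS) ^ 2) by apply pow2_ge_0.
        assert ((KK / 4 - LL * SS) * KK = (KK / 2 - SS) ^ 2).
        { replace ((KK / 4 - LL * SS) * KK) with (KK * KK / 4 - (LL * KK) * SS) by field.
          rewrite HLK. field. }
        destruct (Rle_or_lt (LL * SS) (KK / 4)); auto.
        assert ((KK / 4 - LL * SS) * KK < 0) by (apply Rmult_neg_pos; lra). lra. }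
      assert (Q1 : P * LL <= P) by nra.
      assert (Q2 : A * P * (/ 2 * beta * (LL * SS)) <= A * P * (beta * KK)).
      { apply Rmult_le_compat_l. apply Rmult_le_pos; auto. nra. }
      assert (Q3 : k * SS <= delta * SS) by nra.
      assert (Q4 : k * A * P <= beta * P) by nra.
      assert (Hsum : F' * m t + f t * M' = P * (/ 2 * beta * LL * SS - (2 * delta + eta1 + eta2))).
      { rewrite HF', HM'. unfold P, SS. ring. }
      assert (Hsum2 : F' + M' = beta * P * LL - delta * SS - eta1 * f t - eta2 * m t).
      { rewrite HF', HM'. unfold P, SS. field. }
      assert (Q : F' + M' + A * (F' * m t + f t * M') + k * (SS + A * P) <= 0).
      { rewrite Hsum, Hsum2.
        assert (E1 : A * (P * (/ 2 * beta * LL * SS - (2 * delta + eta1 + eta2)))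
                  = A * P * (/ 2 * beta * (LL * SS)) - P * (A * (2 * delta + eta1 + eta2 - beta * KK)) - A * P * (beta * KK)) by ring.
        rewrite E1, HAc. nra. }
      replace ((F' + M' + A * (F' * m t + f t * M')) * exp (k * t) + (SS + A * P) * (exp (k * t) * k))
        with (exp (k * t) * (F' + M' + A * (F' * m t + f t * M') + k * (SS + A * P))) by ring.
      nra. }
  intros t Ht. split; [auto|split; [auto|]].
  assert (HrG : rc G 0).
  { unfold G. apply rc_mult; [|apply rc_exp].
    apply rc_plus; [apply rc_plus; [apply rcf|apply rcm]; lra|].
    apply rc_mult; [apply rc_const|apply rc_mult; [apply rcf|apply rcm]; lra]. }
  generalize (mono0 G dG HrG HG t Ht). unfold G. rewrite Rmult_0_r, exp_0, Rmult_1_r. auto.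
Qed.

Lemma lim_lemma (h : R -> R) W0 k : 0 < k ->
  (forall t, 0 <= t -> 0 <= h t /\ h t * exp (k * t) <= W0) -> is_lim h p_infty 0.
Proof.
  intros Hk H. apply is_lim_spec. intros eps. simpl.
  destruct (H 0 (Rle_refl 0)) as [H00 H01]. rewrite Rmult_0_r, exp_0, Rmult_1_r in H01.
  assert (He := cond_pos eps).
  set (Q := W0 / (k * eps)).
  assert (HQ : Q * (k * eps) = W0) by (unfold Q; field; lra).
  exists (Rmax 1 Q). intros y Hy.
  assert (y > 1) by (generalize (Rmax_l 1 Q); lra).
  assert (y > Q) by (generalize (Rmax_r 1 Q); lra).
  destruct (H y ltac:(lra)) as [Hy0 Hy1].
  assert (Hex := exp_ineq1_le (k * y)).
  assert (y * (k * eps) > W0) by (assert (0 < k * eps) by nra; nra).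
  assert (Hpos : 0 < exp (k * y)) by apply exp_pos.
  rewrite Rminus_0_r, Rabs_right by lra.
  assert (h y * exp (k * y) < eps * exp (k * y)) by nra.
  nra.
Qed.

Lemma nrm_ge_l x y : 0 <= x -> x <= nrm2 x y.
Proof. intros. unfold nrm2. rewrite <- (sqrt_pow2 x) at 1 by auto. apply sqrt_le_1_alt.
  assert (0 <= y ^ 2) by apply pow2_ge_0. lra. Qed.
Lemma nrm_ge_r x y : 0 <= y -> y <= nrm2 x y.
Proof. intros. unfold nrm2. rewrite <- (sqrt_pow2 y) at 1 by auto. apply sqrt_le_1_alt.
  assert (0 <= x ^ 2) by apply pow2_ge_0. lra. Qed.
Lemma nrm_le x y : 0 <= x -> 0 <= y -> nrm2 x y <= x + y.
Proof. intros. unfold nrm2. rewrite <- (sqrt_pow2 (x + y)) by lra. apply sqrt_le_1_alt. nra. Qed.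

Theorem mainTheorem7 (beta delta K eta1 eta2 : R) :
  0 < beta < 1 -> 0 < delta < 1 -> 0 < K ->
  0 <= eta1 -> 0 <= eta2 ->
  beta * K < 2 * delta + eta1 + eta2 ->
  GAS_origin beta delta eta1 eta2 K.
Proof.
  intros Hb Hd HK He1 He2 Hc.
  set (c := 2 * delta + eta1 + eta2 - beta * K).
  assert (Hc0 : 0 < c) by (unfold c; lra).
  set (A := 2 * beta / c).
  assert (HA : 0 <= A) by (unfold A; apply Rlt_le, Rdiv_lt_0_compat; lra).
  assert (HAc : A * (2 * delta + eta1 + eta2 - beta * K) = 2 * beta) by (fold c; unfold A; field; lra).
  set (k := Rmin delta (c / 2)).
  assert (Hk : 0 < k) by (unfold k; apply Rmin_glb_lt; lra).
  assert (Hkd : k <= delta) by apply Rmin_l.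
  assert (Hkc : k <= c / 2) by apply Rmin_r.
  assert (HkA : k * A <= beta).
  { assert (k * A <= c / 2 * A) by (apply Rmult_le_compat_r; lra).
    assert (c / 2 * A = beta) by (unfold A; field; lra). lra. }
  assert (Hcore := fun f m => core beta delta K eta1 eta2 A k f m ltac:(lra) ltac:(lra) HK He1 He2 HA HAc Hk Hkd HkA).
  split.
  - intros eps Heps.
    set (d := Rmin 1 (eps / (3 + A))).
    assert (Hd1 : d <= 1) by apply Rmin_l.
    assert (Hd2 : d <= eps / (3 + A)) by apply Rmin_r.
    assert (Hdp : 0 < d) by (unfold d; apply Rmin_glb_lt; [lra|apply Rdiv_lt_0_compat; lra]).
    exists d. split; auto.
    intros f m Hsol Hf0 Hm0 Hn t Ht.
    destruct (Hcore f m Hsol Hf0 Hm0 t Ht) as [Hft [Hmt Hw]].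
    assert (f 0 < d) by (generalize (nrm_ge_l (f 0) (m 0) Hf0); lra).
    assert (m 0 < d) by (generalize (nrm_ge_r (f 0) (m 0) Hm0); lra).
    assert (Hex : 1 <= exp (k * t)) by (generalize (exp_ineq1_le (k * t)); nra).
    assert (0 <= A * (f t * m t)) by (apply Rmult_le_pos; [lra|nra]).
    assert (Hfm : f t + m t <= f 0 + m 0 + A * (f 0 * m 0)) by nra.
    assert (A * (f 0 * m 0) <= A * d) by (apply Rmult_le_compat_l; nra).
    assert (d * (3 + A) <= eps) by (apply (Rmult_le_reg_r (/ (3 + A))); [apply Rinv_0_lt_compat; lra|];
      replace (d * (3 + A) * / (3 + A)) with d by (field; lra); exact Hd2).
    generalize (nrm_le (f t) (m t) Hft Hmt). nra.
  - intros f m Hsol Hf0 Hm0.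
    assert (Hc' := Hcore f m Hsol Hf0 Hm0).
    split.
    + apply (lim_lemma f (f 0 + m 0 + A * (f 0 * m 0)) k Hk).
      intros t Ht. destruct (Hc' t Ht) as [Hft [Hmt Hw]].
      split; auto. assert (0 <= A * (f t * m t)) by (apply Rmult_le_pos; [lra|nra]).
      assert (0 < exp (k * t)) by apply exp_pos. nra.
    + apply (lim_lemma m (f 0 + m 0 + A * (f 0 * m 0)) k Hk).
      intros t Ht. destruct (Hc' t Ht) as [Hft [Hmt Hw]].
      split; auto. assert (0 <= A * (f t * m t)) by (apply Rmult_le_pos; [lra|nra]).
      assert (0 < exp (k * t)) by apply exp_pos. nra.
Qed.
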